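(* For every positive integer $k$, there exist a finite simple undirected graph $G$ and an orientation $\vec{G}$ of $G$ such that $\operatorname{adim}(G)\geq\operatorname{bdim}(G)=2^k+k-1$ and $k\geq\operatorname{adim}(\vec{G})\geq\operatorname{bdim}(\vec{G})$.
   Context: An orientation of $G$ is a directed graph obtained by assigning a direction to each edge of $G$. In an undirected graph, $d(u,v)$ is the shortest-path distance; in a directed graph, $d(u,v)$ is the length of a shortest directed path from $u$ to $v$; in both cases $d(u,v)=\infty$ if no such path exists. For a nonnegative integer $k$, $d_k(u,v)=\min(d(u,v),k+1)$. A function $f:V\to\mathbb{Z}_{\geq 0}$ is a resolving broadcast if for any distinct vertices $x,y$ there is $z$ with $f(z)>0$ and $d_{f(z)}(z,x)\neq d_{f(z)}(z,y)$. The broadcast dimension $\operatorname{bdim}$ is the minimum of $\sum_v f(v)$ over resolving broadcasts $f$. A set $A$ of vertices is an adjacency resolving set if for any distinct $x,y$ there is $z\in A$ with $d_1(z,x)\neq d_1(z,y)$; the adjacency dimension $\operatorname{adim}$ is the minimum cardinality of such a set. *)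

(* Defs.v *)
From mathcomp Require Import all_boot.
Set Implicit Arguments. Unset Strict Implicit. Unset Printing Implicit Defensive.

(* A graph (undirected or directed) on a finite vertex type T is given by
   its (arc) relation r : rel T; for an undirected graph r is symmetric.   *)

Definition simple_graph (T : finType) (e : rel T) : Prop :=
  symmetric e /\ irreflexive e.

Definition is_orientation (T : finType) (e o : rel T) : Prop :=
  [/\ forall x y, o x y -> e x y,
      forall x y, e x y -> o x y || o y x &
      forall x y, o x y -> ~~ o y x].

(* ball r m u = set of vertices v reachable from u by an r-walk
   (directed along r) of length at most m. *)
Definition ball (T : finType) (r : rel T) (m : nat) (u : T) : {set T} :=
  iter m (fun S => S :|: [set y | [exists x in S, r x y]]) [set u].

(* d_k(u,v) = min(d(u,v), k+1), where d is the (directed) shortest-path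
   distance along r (infinite if unreachable): the least m <= k with
   v in ball r m u, and k+1 if there is none. *)
Definition dk (T : finType) (r : rel T) (k : nat) (u v : T) : nat :=
  find (fun m => v \in ball r m u) (iota 0 k.+1).

Definition resolving_broadcast (T : finType) (r : rel T) (f : {ffun T -> nat}) : Prop :=
  forall x y : T, x != y -> exists z : T, 0 < f z /\ dk r (f z) z x != dk r (f z) z y.

Definition broadcast_cost (T : finType) (f : {ffun T -> nat}) : nat :=
  \sum_(v : T) f v.

Definition is_bdim (T : finType) (r : rel T) (n : nat) : Prop :=
  (exists f, resolving_broadcast r f /\ broadcast_cost f = n) /\
  (forall f, resolving_broadcast r f -> n <= broadcast_cost f).

Definition adjacency_resolving (T : finType) (r : rel T) (A : {set T}) : Prop :=
  forall x y : T, x != y -> exists2 z, z \in A & dk r 1 z x != dk r 1 z y.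

Definition is_adim (T : finType) (r : rel T) (n : nat) : Prop :=
  (exists A, adjacency_resolving r A /\ #|A| = n) /\
  (forall A, adjacency_resolving r A -> n <= #|A|).

(* Main.v *)
Require Import Defs.
From mathcomp Require Import all_boot.
From Stdlib Require Import Classical.

Set Implicit Arguments. Unset Strict Implicit. Unset Printing Implicit Defensive.

Lemma ball1 (T : finType) (r : rel T) u v : (v \in ball r 1 u) = (v == u) || r u v.
Proof.
rewrite /ball /= in_setU in_set1 in_set; congr orb.
apply/existsP/idP => [[x /andP[/set1P -> //]] | h].
by exists u; rewrite in_set1 eqxx.
Qed.

Lemma dk_self (T : finType) (r : rel T) m u : dk r m u u = 0.
Proof. by rewrite /dk /= /ball /= in_set1 eqxx. Qed.

Lemma dk_adj (T : finType) (r : rel T) n u v : v != u -> r u v -> dk r n.+1 u v = 1.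
Proof.
move=> nvu ruv; rewrite /dk /=.
have -> : (v \in ball r 0 u) = false by rewrite /ball /= in_set1 (negbTE nvu).
by rewrite ball1 ruv orbT.
Qed.

Lemma dk1_ne0 (T : finType) (r : rel T) u v : v != u -> dk r 1 u v != 0.
Proof.
move=> nvu; rewrite /dk /=.
have -> : (v \in ball r 0 u) = false by rewrite /ball /= in_set1 (negbTE nvu).
by [].
Qed.

Lemma dk_nadj (T : finType) (r : rel T) u v : v != u -> ~~ r u v -> dk r 1 u v = 2.
Proof.
move=> nvu ruv; rewrite /dk /=.
have -> : (v \in ball r 0 u) = false by rewrite /ball /= in_set1 (negbTE nvu).
by rewrite ball1 (negbTE ruv) (negbTE nvu).
Qed.

Lemma ex_min (P : nat -> Prop) : (exists n, P n) -> exists n, P n /\ forall m, P m -> n <= m.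
Proof.
move=> [n0 Pn0].
suff H : forall N n, n <= N -> P n -> exists n, P n /\ forall m, P m -> n <= m.
  exact: (H n0 n0 (leqnn n0) Pn0).
elim=> [|N IH] n lenN Pn.
  by exists n; split => // m _; move: lenN; rewrite leqn0 => /eqP ->.
destruct (classic (exists m, m < n /\ P m)) as [[m [ltm Pm]]|H].
  by apply: (IH m) => //; rewrite -ltnS (leq_trans ltm).
exists n; split => // m Pm; rewrite leqNgt; apply/negP => lt.
by apply: H; exists m.
Qed.

Lemma adim_ex (T : finType) (r : rel T) : exists n, is_adim r n.
Proof.
have H0 : adjacency_resolving r [set: T].
  move=> x y nxy; exists x; first exact: in_setT.
  by rewrite dk_self eq_sym dk1_ne0 // eq_sym.
have [n [[A [HA <-]] Hm]] := ex_min (P := fun n => exists A, adjacency_resolving r A /\ #|A| = n)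
  (ex_intro _ _ (ex_intro _ _ (conj H0 erefl))).
exists #|A|; split; first by exists A.
by move=> B HB; apply: Hm; exists B.
Qed.

Lemma bdim_ex (T : finType) (r : rel T) : exists n, is_bdim r n.
Proof.
have H0 : resolving_broadcast r [ffun=> 1].
  move=> x y nxy; exists x; rewrite ffunE; split => //.
  by rewrite dk_self eq_sym dk1_ne0 // eq_sym.
have [n [[f [Hf <-]] Hm]] := ex_min (P := fun n => exists f, resolving_broadcast r f /\ broadcast_cost f = n)
  (ex_intro _ _ (ex_intro _ _ (conj H0 erefl))).
exists (broadcast_cost f); split; first by exists f.
by move=> g Hg; apply: Hm; exists g.
Qed.

Lemma bdim_le_adim (T : finType) (r : rel T) a b : is_adim r a -> is_bdim r b -> b <= a.
Proof.
move=> [[A [HA <-]] _] [_ Hb].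
pose f := [ffun v => nat_of_bool (v \in A)].
have -> : #|A| = broadcast_cost f.
  by rewrite /broadcast_cost -sum1_card [LHS]big_mkcond /=; apply: eq_bigr => v _; rewrite ffunE; case: (v \in A).
apply: Hb => x y nxy; have [z zA Hz] := HA x y nxy.
by exists z; rewrite ffunE zA.
Qed.

Lemma bdim_complete (T : finType) (t0 : T) : is_bdim (fun x y : T => x != y) (#|T| - 1).
Proof.
split.
  exists [ffun v => nat_of_bool (v != t0)]; split.
  - move=> x y nxy.
    case xt: (x == t0).
      have yt : y != t0 by move/eqP: xt => <-; rewrite eq_sym.
      exists y; rewrite ffunE yt; split => //.
      by rewrite dk_self dk_adj // eq_sym.
    exists x; rewrite ffunE xt; split => //.
    by rewrite dk_self dk_adj // eq_sym.
  - rewrite /broadcast_cost subn1 -(cardC1 t0) -sum1_card [RHS]big_mkcond /=.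
    by apply: eq_bigr => v _; rewrite ffunE.
move=> f Hf.
have [t Ht] : exists t, forall v, v != t -> 0 < f v.
  case: (pickP (fun t => f t == 0)) => [t /eqP ft0|none]; last first.
    by exists t0 => v _; rewrite lt0n none.
  exists t => v nvt; rewrite lt0n; apply/negP => /eqP fv0.
  have [z [fz Hz]] := Hf v t nvt.
  have zv : z != v by apply: contraTneq fz => ->; rewrite fv0.
  have zt : z != t by apply: contraTneq fz => ->; rewrite ft0.
  move: Hz; case: (f z) fz => [//|n] _.
  rewrite (@dk_adj _ _ n z v) ?(@dk_adj _ _ n z t) ?eqxx //; by rewrite eq_sym.
rewrite subn1 -(cardC1 t) -sum1_card /broadcast_cost big_mkcond /=.
apply: leq_sum => v _; case: ifP => // /Ht; by [].
Qed.

Notation TT k := ('I_k + {set 'I_k})%type.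
Section Constr.
Variable k : nat.
Definition erel : rel (TT k) := fun x y => x != y.
Definition orel : rel (TT k) := fun x y =>
  match x, y with
  | inl i, inl j => i < j
  | inl i, inr X => i \in X
  | inr X, inl i => i \notin X
  | inr X, inr U => enum_rank X < enum_rank U
  end.

Lemma orel_orient : is_orientation erel orel.
Proof.
split.
- case=> [i|X] [j|U] //=; rewrite /erel //=.
  + by move=> h; apply/eqP => -[e]; move: h; rewrite e ltnn.
  + by move=> h; apply/eqP => -[e]; move: h; rewrite e ltnn.
- case=> [i|X] [j|U] //=; rewrite /erel //=.
  + move=> h; rewrite -neq_ltn; apply: contra h => /eqP e.
    by apply/eqP; congr inl; apply: val_inj.
  + by case: (i \in U).
  + by case: (j \in X).
  + move=> h; rewrite -neq_ltn; apply: contra h => /eqP e.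
    by apply/eqP; congr inr; apply: enum_rank_inj; apply: val_inj.
- case=> [i|X] [j|U] //=.
  + by move=> h; rewrite -leqNgt ltnW.
  + by move=> ->.
  + by move=> h; rewrite -leqNgt ltnW.
Qed.

Lemma orel_res : adjacency_resolving orel [set inl i | i : 'I_k].
Proof.
have mem i : (inl i : TT k) \in [set inl i | i : 'I_k] by apply: imset_f.
case=> [i|X] [j|U] nxy.
- by exists (inl i) => //; rewrite dk_self eq_sym dk1_ne0 // eq_sym.
- by exists (inl i) => //; rewrite dk_self eq_sym dk1_ne0.
- by exists (inl j) => //; rewrite dk_self dk1_ne0.
- have [i Hi] : exists i, (i \in X) != (i \in U).
    apply: NNPP => H; move/eqP: nxy; apply; congr inr; apply/setP => i.
    by apply/eqP; apply: negbNE; apply/negP => h; apply: H; exists i.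
  exists (inl i) => //.
  move: Hi; case iS: (i \in X); case iU: (i \in U) => // _.
  + by rewrite dk_adj // (dk_nadj (u := inl i)) //= iU.
  + by rewrite (dk_nadj (u := inl i)) //= ?iS // dk_adj.
Qed.
End Constr.

Theorem theorem5p4 :
  forall k : nat, 0 < k ->
  exists (T : finType) (e o : rel T),
    [/\ simple_graph e, is_orientation e o &
      exists aG bG aO bO : nat,
        [/\ is_adim e aG, is_bdim e bG, is_adim o aO, is_bdim o bO &
          [/\ bG <= aG, bG = 2 ^ k + k - 1, aO <= k & bO <= aO]]].
Proof.
move=> k _.
exists (TT k), (@erel k), (@orel k).
split.
- split; first by move=> x y; rewrite /erel eq_sym.
  by move=> x; rewrite /erel eqxx.
- exact: orel_orient.
have [aG HaG] := adim_ex (@erel k).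
have [aO HaO] := adim_ex (@orel k).
have [bO HbO] := bdim_ex (@orel k).
have HbG := bdim_complete (inr set0 : TT k).
exists aG, (#|{: TT k}| - 1), aO, bO; split => //; split.
- exact: bdim_le_adim HaG HbG.
- by rewrite card_sum card_ord -cardsT -powersetT card_powerset cardsT card_ord addnC.
- case: HaO => _ H; apply: leq_trans (H _ (@orel_res k)) _.
  by rewrite card_imset ?card_ord // => i j [].
- exact: bdim_le_adim HaO HbO.
Qed.
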